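(* Let $M$ be a finite abelian group of exponent greater than $2$ and let $g$ be a proper half-automorphism of $L_M$. Let $g'\in\mathrm{Aut}(K)$ and $u,v\in M$ (with $u^2=v^2=1$) be such that $g(A,1)=(g'(A),\alpha_{(u,v)}(A))$ for all $A\in K$, and let $g''\in\mathrm{Aut}(M)$ be defined by $g(1,x)=(1,g''(x))$ for $x\in M$ (these exist for every half-automorphism). Then $g=F^-_{(g',g'',u,v)}$.
   Context: Let $K=\{1,a,b,c\}$ be the Klein four-group. Set $L_M=K\times M$ with the operation $(A,x)*(B,y)=(AB,xy)$ if $B=1$, and $(A,x)*(B,y)=(AB,x^{-1}y)$ if $B\neq 1$. For $u,v\in M$ with $u^2=v^2=1$, $\alpha_{(u,v)}:K\to M$ is defined by $\alpha_{(u,v)}(1)=1$, $\alpha_{(u,v)}(a)=u$, $\alpha_{(u,v)}(b)=v$, $\alpha_{(u,v)}(c)=uv$. For $f'\in\mathrm{Aut}(K)$, $f''\in\mathrm{Aut}(M)$ define $F^-_{(f',f'',u,v)}(1,x)=(1,f''(x))$ and $F^-_{(f',f'',u,v)}(A,x)=(f'(A),f''(x^{-1})\alpha_{(u,v)}(A))$ for $A\neq 1$. A half-automorphism of a loop $L$ is a bijection $f:L\to L$ with $f(XY)\in\{f(X)f(Y),f(Y)f(X)\}$ for all $X,Y$; it is proper if it is neither an automorphism nor an anti-automorphism. *)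

(* Defs.v *)
From mathcomp Require Import all_boot all_fingroup all_solvable.
Set Implicit Arguments. Unset Strict Implicit. Unset Printing Implicit Defensive.
Import GroupScope.
Local Open Scope group_scope.

Inductive Klein : Type := K1 | Ka | Kb | Kc.

Definition kmul (A B : Klein) : Klein :=
  match A, B with
  | K1, X | X, K1 => X
  | Ka, Ka | Kb, Kb | Kc, Kc => K1
  | Ka, Kb | Kb, Ka => Kc
  | Ka, Kc | Kc, Ka => Kb
  | Kb, Kc | Kc, Kb => Ka
  end.

Definition is_autK (f : Klein -> Klein) : Prop :=
  bijective f /\ forall A B, f (kmul A B) = kmul (f A) (f B).

Definition is_autM (gT : finGroupType) (f : gT -> gT) : Prop :=
  bijective f /\ forall x y : gT, f (x * y) = f x * f y.

Definition LM (gT : finGroupType) : Type := (Klein * gT)%type.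

Definition LMmul (gT : finGroupType) (X Y : LM gT) : LM gT :=
  match X, Y with
  | (A, x), (B, y) =>
    match B with
    | K1 => (kmul A B, x * y)
    | _ => (kmul A B, x^-1 * y)
    end
  end.

Definition alpha (gT : finGroupType) (u v : gT) (A : Klein) : gT :=
  match A with
  | K1 => 1
  | Ka => u
  | Kb => v
  | Kc => u * v
  end.

Definition Fminus (gT : finGroupType) (f' : Klein -> Klein) (f'' : gT -> gT)
    (u v : gT) (X : LM gT) : LM gT :=
  match X with
  | (K1, x) => (K1, f'' x)
  | (A, x) => (f' A, f'' (x^-1) * alpha u v A)
  end.

Definition is_half_aut (gT : finGroupType) (f : LM gT -> LM gT) : Prop :=
  bijective f /\
  forall X Y, f (LMmul X Y) = LMmul (f X) (f Y) \/ f (LMmul X Y) = LMmul (f Y) (f X).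

Definition is_aut_LM (gT : finGroupType) (f : LM gT -> LM gT) : Prop :=
  bijective f /\ forall X Y, f (LMmul X Y) = LMmul (f X) (f Y).

Definition is_antiaut_LM (gT : finGroupType) (f : LM gT -> LM gT) : Prop :=
  bijective f /\ forall X Y, f (LMmul X Y) = LMmul (f Y) (f X).

Definition is_proper_half_aut (gT : finGroupType) (f : LM gT -> LM gT) : Prop :=
  is_half_aut f /\ ~ is_aut_LM f /\ ~ is_antiaut_LM f.

(* Main.v *)
Require Import Defs.
From mathcomp Require Import all_boot all_fingroup all_solvable.
From Stdlib Require Import Classical.
Import GroupScope.
Local Open Scope group_scope.

Lemma kmul1r A : kmul A K1 = A. Proof. by case: A. Qed.
Lemma kmul1l A : kmul K1 A = A. Proof. by case: A. Qed.
Lemma kmulxx A : kmul A A = K1. Proof. by case: A. Qed.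

Lemma LMmul_K1 (gT : finGroupType) A (x y : gT) :
  LMmul (A,x) (K1,y) = (A, x*y).
Proof. by case: A. Qed.
Lemma LMmul_n {gT : finGroupType} {B} (nB : B <> K1) A (x y : gT) :
  LMmul (A,x) (B,y) = (kmul A B, x^-1*y).
Proof. by case: B nB. Qed.

Lemma FmE (gT : finGroupType) f' (f'' : gT -> gT) u v A x : A <> K1 ->
  Fminus f' f'' u v (A,x) = (f' A, f'' (x^-1) * alpha u v A).
Proof. by case: A. Qed.

Section Alg.
Variable gT : finGroupType.
Hypothesis C : forall x y : gT, x * y = y * x.

Lemma sq_inv (z : gT) : z * z = 1 -> z^-1 = z.
Proof. by move=> e; apply: (mulgI z); rewrite mulgV e. Qed.

Lemma alpha_inv (u v : gT) : u * u = 1 -> v * v = 1 -> forall A,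
  (alpha u v A)^-1 = alpha u v A.
Proof.
move=> uu vv [] /=; first exact: invg1.
- exact: sq_inv.
- exact: sq_inv.
- by rewrite invMg !sq_inv // C.
Qed.

Lemma alpha_mul (u v : gT) : u * u = 1 -> v * v = 1 -> forall A B,
  alpha u v (kmul A B) = alpha u v A * alpha u v B.
Proof.
move=> uu vv [] [] /=; rewrite ?mul1g ?mulg1 ?uu ?vv //.
- by rewrite mulgA uu mul1g.
- by rewrite mulgA (C v u) -mulgA vv mulg1.
- by rewrite (C _ u) mulgA uu mul1g.
- by rewrite -mulgA vv mulg1.
- by rewrite -mulgA (mulgA v) (C v u) -(mulgA u v v) vv mulg1 uu.
Qed.

Lemma E1 (z a w : gT) : z^-1 * a = (w^-1 * z)^-1 * (a * w) -> w^-1 * a = a * w.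
Proof.
rewrite invMg invgK -mulgA => /mulgI e. by rewrite {1}e mulKg.
Qed.

Lemma E2a (a b z : gT) : a^-1 = a -> a * b = (a * z)^-1 * (z^-1 * b) ->
  z^-1 * b = b * z.
Proof.
move=> ai; rewrite invMg ai => e.
have zz : z^-1 * z^-1 = 1.
  apply: (mulIg (a * b)); rewrite mul1g {2}e.
  by rewrite -!mulgA (mulgA a) (C a z^-1) -!mulgA.
have : z^-1 = z by rewrite -{2}(invgK z) (sq_inv _ zz).
by move=> ->; rewrite C.
Qed.

Lemma E2b (a b z : gT) : b^-1 = b -> a * b = (z^-1 * b)^-1 * (a * z) ->
  z^-1 * b = b * z.
Proof.
move=> bi; rewrite invMg bi invgK => e.
have zz : z * z = 1.
  apply: (mulIg (a * b)); rewrite mul1g {2}e.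
  rewrite (C b z) -!mulgA; congr (_ * _).
  by rewrite [RHS]C mulgA (C z a).
by rewrite (sq_inv _ zz) C.
Qed.
End Alg.

Theorem proposition4p12 (gT : finGroupType)
    (Mab : abelian [set: gT]) (Mexp : (2 < exponent [set: gT])%N)
    (g : LM gT -> LM gT) (Hg : is_proper_half_aut g)
    (g' : Klein -> Klein) (Hg' : is_autK g')
    (u v : gT) (Hu : u ^+ 2 = 1) (Hv : v ^+ 2 = 1)
    (HgK : forall A : Klein, g (A, 1) = (g' A, alpha u v A))
    (g'' : gT -> gT) (Hg'' : is_autM g'')
    (HgM : forall x : gT, g (K1, x) = (K1, g'' x)) :
  forall X : LM gT, g X = Fminus g' g'' u v X.
Proof.
have C : forall x y : gT, x * y = y * x.
  by move=> x y; move/centsP: Mab => /(_ x (in_setT x) y (in_setT y)).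
have uu : u * u = 1 by rewrite -Hu expgS expg1.
have vv : v * v = 1 by rewrite -Hv expgS expg1.
set h := g''.
have hM : forall x y, h (x * y) = h x * h y := Hg''.2.
have h1 : h 1 = 1.
  have e := hM 1 1; rewrite mulg1 in e.
  by apply: (mulgI (h 1)); rewrite mulg1 -e.
have hV : forall x, h x^-1 = (h x)^-1.
  by move=> x; apply: (mulgI (h x)); rewrite mulgV -hM mulgV h1.
have g'1 : g' K1 = K1.
  by have e := Hg'.2 K1 K1; rewrite !kmulxx in e.
have g'n : forall A, A <> K1 -> g' A <> K1.
  move=> A nA e; apply: nA; apply: (bij_inj Hg'.1); by rewrite e g'1.
have Hh := Hg.1.2.
have f3 : forall A x, A <> K1 ->
   g (A,x) = (g' A, alpha u v A * h x) \/ g (A,x) = (g' A, (h x)^-1 * alpha u v A).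
  move=> A x nA; have := Hh (A,1) (K1,x).
  by rewrite LMmul_K1 mul1g HgK HgM LMmul_K1 (LMmul_n (g'n _ nA)) kmul1l.
move=> [A0 x0].
case: (classic (g (A0,x0) = Fminus g' g'' u v (A0,x0))) => // Hne.
have nA0 : A0 <> K1 by move=> e; apply: Hne; rewrite e HgM.
suff Hall : forall B y, g (B,y) = (g' B, alpha u v B * h y).
  exfalso; apply: Hg.2.1; split; first exact: Hg.1.1.
  move=> [A x] [B y]; case: (classic (B = K1)) => [->|nB].
    by rewrite LMmul_K1 !Hall g'1 LMmul_K1 /= mul1g hM mulgA.
  rewrite (LMmul_n nB) !Hall (LMmul_n (g'n _ nB)) Hg'.2 alpha_mul //.
  rewrite hM hV invMg alpha_inv // !mulgA; congr pair.
  by congr (_ * _); rewrite [LHS]C mulgA.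
have PA0 : g (A0,x0) = (g' A0, alpha u v A0 * h x0).
  by case: (f3 A0 x0 nA0) => // e; exfalso; apply: Hne; rewrite e FmE // -/h hV.
have hneq : alpha u v A0 * h x0 <> (h x0)^-1 * alpha u v A0.
  by move=> e; apply: Hne; rewrite PA0 e FmE // -/h hV.
have stepa : forall y, g (A0,y) = (g' A0, alpha u v A0 * h y).
  move=> y; have := Hh (A0,x0) (K1, x0^-1 * y).
  rewrite LMmul_K1 mulKVg PA0 HgM -/h LMmul_K1 (LMmul_n (g'n _ nA0)) kmul1l hM hV.
  case=> e.
    by rewrite e -mulgA mulKVg.
  case: (f3 A0 y nA0) => // e'; rewrite e' in e; case: e => e.
  by exfalso; apply: hneq; symmetry; exact: (@E1 _ _ _ _ e).
move=> B y; case: (classic (B = K1)) => [->|nB]; first by rewrite HgM g'1 /= mul1g.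
case: (classic (g (B,y) = (g' B, alpha u v B * h y))) => // HnP; exfalso.
have eB : g (B,y) = (g' B, (h y)^-1 * alpha u v B) by case: (f3 B y nB).
have nPB : (h y)^-1 * alpha u v B <> alpha u v B * h y.
  by move=> e; apply: HnP; rewrite eB e.
have := Hh (A0,y) (B,y).
rewrite (LMmul_n nB) mulVg HgK stepa eB (LMmul_n (g'n _ nB)) (LMmul_n (g'n _ nA0)) alpha_mul //.
case=> [[_ e]|[_ e]]; apply: nPB.
- exact: (@E2a _ C _ _ _ (@alpha_inv _ C _ _ uu vv A0) e).
- exact: (@E2b _ C _ _ _ (@alpha_inv _ C _ _ uu vv B) e).
Qed.
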